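(* Let $\bar G=(\bar V,\bar E)$ be a connected undirected graph whose node set is totally ordered by $<$. Define the directed graph $G_{VC}=(V_{VC},E_{VC})$ by $V_{VC}=\bar V\sqcup\{\hat r\}$ and $E_{VC}=\{(i,j):\{i,j\}\in\bar E,\ i<j\}\cup\{(\hat r,i):i\in\bar V\}$. Then the minimum extraction width of an extraction order of $G_{VC}$ rooted at $\hat r$ equals the size of a minimum vertex cover of $\bar G$ plus one.
   Context: An extraction order of a directed graph $G=(V,E)$ is a rooted directed acyclic graph $G^{\mathcal X}=(V,E^{\mathcal X},s)$ in which every node is reachable from the root $s$ and $E^{\mathcal X}$ is obtained from $E$ by reversing some (possibly no) edges. A confluence from $a$ to $b$ is a pair of directed paths in $E^{\mathcal X}$ from $a$ to $b$ sharing no node other than $a,b$. For $e\in E^{\mathcal X}$, its label set $\mathcal L_e$ is the set of nodes $b$ such that $e$ lies on some confluence with target $b$. Each node's outgoing edges are partitioned into bags: classes of the equivalence relation generated by $e\sim e'$ iff $\mathcal L_e\cap\mathcal L_{e'}\ne\emptyset$; bag label set $\mathcal L_B=\bigcup_{e\in B}\mathcal L_e$. The extraction width is $1+\max|\mathcal L_B|$ over all bags of all nodes. *)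

(* Defs.v *)
From mathcomp Require Import all_boot all_order.
From mathcomp Require Import boolp.
Set Implicit Arguments. Unset Strict Implicit. Unset Printing Implicit Defensive.
Import Order.TTheory.

Section XOrd.
Variable T : finType.

Definition xorder (E X : rel T) (s : T) : Prop :=
  [/\ (forall u v, E u v -> (X u v && ~~ X v u) || (X v u && ~~ X u v)),
      (forall u v, X u v -> E u v || E v u),
      (forall u v, X u v -> ~~ connect X v u)
    & (forall v, connect X s v)].

(* A directed path in X from a to b, given as the list p of nodes after a. *)
Definition dpath (X : rel T) (a b : T) (p : seq T) : bool :=
  path X a p && (last a p == b).

Definition confluence (X : rel T) (a b : T) (p1 p2 : seq T) : Prop :=
  [/\ dpath X a b p1, dpath X a b p2, p1 != p2
    & forall x, x \in a :: p1 -> x \in a :: p2 -> (x == a) || (x == b)].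

Definition edge_on (a : T) (p : seq T) (u v : T) : bool :=
  (u, v) \in zip (a :: p) p.

Definition label (X : rel T) (u v : T) : {set T} :=
  [set b | `[< exists a p1 p2, confluence X a b p1 p2 /\
                 (edge_on a p1 u v || edge_on a p2 u v) >] ].

Definition bag_rel (X : rel T) (u : T) : rel T :=
  fun v w => [&& X u v, X u w & [exists b, (b \in label X u v) && (b \in label X u w)]].

(* Label set of the bag of node u containing the outgoing edge (u,v): the
   union of the label sets of the edges in its class for the equivalence
   generated by bag_rel. *)
Definition bag_label (X : rel T) (u v : T) : {set T} :=
  \bigcup_(w | X u w && connect (bag_rel X u) v w) label X u w.

Definition xwidth (X : rel T) : nat :=
  (\max_(u : T) \max_(v | X u v) #|bag_label X u v|).+1.

End XOrd.

Section VC.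
Variable V : finType.

Definition vertex_cover (E : rel V) (C : {set V}) : Prop :=
  forall x y, E x y -> (x \in C) || (y \in C).

End VC.

(* The directed graph G_VC on option V: None is the extra root r^,
   Some i are the original nodes. *)
Definition G_VC (d : Order.disp_t) (V : finOrderType d) (E : rel V)
  : rel (option V) :=
  fun x y => match x, y with
             | Some i, Some j => E i j && (i < j)%O
             | None, Some _ => true
             | _, None => false
             end.

(* Main.v *)
Require Import Defs.
From mathcomp Require Import all_boot all_order.
From mathcomp Require Import boolp.
Set Implicit Arguments. Unset Strict Implicit. Unset Printing Implicit Defensive.
Import Order.TTheory.

Section S.
Variables (d : Order.disp_t) (V : finOrderType d) (E : rel V).
Hypotheses (Esym : symmetric E) (Eirr : irreflexive E)
  (Econn : forall x y : V, connect E x y).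

Local Notation G := (G_VC E).

Lemma root_edge (X : rel (option V)) : xorder G X None -> forall i, X None (Some i).
Proof.
case=> H1 H2 H3 H4 i.
have := H1 None (Some i) isT; case/orP=> /andP[h _] //.
by move: (H3 _ _ h); rewrite H4.
Qed.

Lemma edge_or (X : rel (option V)) : xorder G X None -> forall i j, E i j ->
  X (Some i) (Some j) || X (Some j) (Some i).
Proof.
case=> H1 _ _ _ i j eij.
have nij : i != j by apply: contraTneq eij => ->; rewrite Eirr.
case/orP: (lt_total nij) => lij.
- have := H1 (Some i) (Some j); rewrite /G_VC /= eij lij => /(_ isT).
  by case/orP=> /andP[-> _] //; rewrite orbT.
- have := H1 (Some j) (Some i); rewrite /G_VC /= (Esym j i) eij lij => /(_ isT).
  by case/orP=> /andP[-> _] //; rewrite orbT.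
Qed.

Lemma in_label (X : rel (option V)) (i b : V) : X None (Some i) -> X (Some i) (Some b) ->
  X None (Some b) ->
  (Some b \in label X None (Some i)) && (Some b \in label X None (Some b)).
Proof.
move=> h1 h2 h3.
have conf : confluence X None (Some b) [:: Some b] [:: Some i; Some b].
  split; rewrite /dpath /= ?h1 ?h2 ?h3 ?eqxx //.
    by apply/eqP => /(congr1 size).
  by move=> x; rewrite !inE => /orP[->//|->]; rewrite orbT.
rewrite /label !inE; apply/andP; split; apply/asboolP;
  exists None, [:: Some b], [:: Some i; Some b]; split=> //;
  by rewrite /edge_on /= ?inE ?eqxx ?orbT.
Qed.

Lemma bag_edge (X : rel (option V)) : xorder G X None -> forall i j, E i j ->
  bag_rel X None (Some i) (Some j).
Proof.
move=> hX i j eij; have r := root_edge hX.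
rewrite /bag_rel !r /=.
case/orP: (edge_or hX eij) => h.
- have /andP[l1 l2] := in_label (r i) h (r j).
  by apply/existsP; exists (Some j); rewrite l1 l2.
- have /andP[l1 l2] := in_label (r j) h (r i).
  by apply/existsP; exists (Some i); rewrite l1 l2.
Qed.

Lemma bag_conn (X : rel (option V)) : xorder G X None -> forall x y,
  connect (bag_rel X None) (Some x) (Some y).
Proof.
move=> hX x y; case/connectP: (Econn x y) => p.
elim: p x => [|z p IH] x /=; first by move=> _ ->.
case/andP=> exz hp hl.
apply: connect_trans (connect1 (bag_edge hX exz)) _.
exact: IH.
Qed.

Lemma lower (X : rel (option V)) : xorder G X None -> forall C : {set V},
  (forall C', vertex_cover E C' -> #|C| <= #|C'|) -> #|C|.+1 <= xwidth X.
Proof.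
move=> hX C Cmin; have r := root_edge hX.
rewrite /xwidth ltnS.
case: (pickP (@predT V)) => [x0 _|hemp]; last first.
  have := Cmin set0 (fun x y _ => ltac:(by have := hemp x)).
  by rewrite cards0 leqn0 => /eqP ->.
set N := [set b : V | [exists i, X (Some i) (Some b)]].
have Ncov : vertex_cover E N.
  move=> x y exy; rewrite !inE; case/orP: (edge_or hX exy) => h; apply/orP;
  [right|left]; apply/existsP; by [exists x | exists y].
apply: leq_trans (Cmin _ Ncov) _.
have sub : Some @: N \subset bag_label X None (Some x0).
  apply/subsetP => _ /imsetP[b bN ->].
  move: bN; rewrite inE => /existsP[i hib].
  rewrite /bag_label; apply/bigcupP; exists (Some b).
    by rewrite r /= bag_conn.
  by have /andP[_ l] := in_label (r i) hib (r b).
rewrite -(card_imset N (@Some_inj _)).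
apply: leq_trans (subset_leq_card sub) _.
apply: leq_trans (@leq_bigmax_cond _ (X None) (fun v => #|bag_label X None v|) (Some x0) (r x0)) _.
exact: (@leq_bigmax_cond _ xpredT (fun u => \max_(v | X u v) #|bag_label X u v|) None isT).
Qed.

Variables (C : {set V}) (Ccov : vertex_cover E C).

Definition key (i j : V) :=
  ((i \notin C) && (j \in C)) || [&& i \in C, j \in C & (i < j)%O].

Definition X0 : rel (option V) := fun x y =>
  match x, y with
  | None, Some _ => true
  | Some i, Some j => E i j && key i j
  | _, _ => false
  end.

Definition rk (x : option V) : nat :=
  match x with
  | None => 0
  | Some i => if i \in C then (#|[set k | (k < i)%O]|).+2 else 1
  end.

Lemma X0_rk x y : X0 x y -> rk x < rk y.
Proof.
case: x => [i|]; case: y => [j|] //=; last by case: ifP.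
case/andP=> _; rewrite /key.
case/orP=> [/andP[/negbTE -> ->]|/and3P[-> -> lij]] //.
rewrite !ltnS; apply: proper_card; apply/properP; split.
  by apply/subsetP => k; rewrite !inE => /lt_trans; apply.
by exists i; rewrite !inE ?ltxx ?lij.
Qed.

Lemma path_rk a p : path X0 a p -> forall x, x \in p -> rk a < rk x.
Proof.
elim: p a => [|y p IH] a //= /andP[h hp] x; rewrite inE => /orP[/eqP->|xp].
  exact: X0_rk.
exact: ltn_trans (X0_rk h) (IH _ hp _ xp).
Qed.

Lemma path_last a p : path X0 a p -> rk a <= rk (last a p).
Proof.
move=> hp; have := mem_last a p; rewrite inE => /orP[/eqP->//|].
by move/(path_rk hp)/ltnW.
Qed.

Lemma X0_xorder : xorder G X0 None.
Proof.
split.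
- case=> [i|]; case=> [j|] //=; rewrite /G_VC /=.
  case/andP=> eij lij; rewrite (Esym j i) eij /= /key (lt_gtF lij) lij.
  have := Ccov eij.
  by case: (i \in C); case: (j \in C).
- case=> [i|]; case=> [j|] //=; rewrite /G_VC /=.
  case/andP=> eij kij; rewrite (Esym j i) eij /=.
  have nij : i != j.
    by apply: contraTneq kij => ->; rewrite /key ltxx; case: (j \in C).
  exact: lt_total.
- move=> u v h; apply/negP => /connectP[p hp e].
  have := X0_rk h; have := path_last hp; rewrite -e => le lt.
  by have := leq_ltn_trans le lt; rewrite ltnn.
- by case=> [i|]; [apply: connect1 | apply: connect0].
Qed.

Lemma none_notin a p : path X0 a p -> None \notin p.
Proof.
elim: p a => //= y p IH a /andP[h hp]; rewrite inE negb_or (IH _ hp) andbT.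
by apply/eqP => eN; move: h; rewrite -eN; case: a.
Qed.

Lemma last_in (a : option V) (p : seq (option V)) : p != [::] -> last a p \in p.
Proof. by case: p => //= z q _; exact: mem_last. Qed.

Lemma shape a p y : y \notin C -> path X0 a p -> last a p = Some y ->
  (p = [::] /\ a = Some y) \/ p = [:: Some y].
Proof.
move=> yC hp hl.
case: (altP (p =P [::])) => [e|ne]; first by left; subst p.
right; move: hp hl ne; case/lastP: p => [//|q z] hp hl _.
rewrite last_rcons in hl; subst z.
have nN := none_notin hp.
rewrite rcons_path in hp; case/andP: hp => hq hlast.
have lN : last a q = None.
  move: hlast; case: (last a q) => [i|] //= /andP[_].
  by rewrite /key (negbTE yC) andbF andbF.
case: q hq lN nN {hlast} => [//|z q'] _ /= lN.
by rewrite -rcons_cons mem_rcons inE -lN mem_last orbT.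
Qed.

Lemma label_sub (X : rel (option V)) (u v : option V) : X = X0 -> label X u v \subset Some @: C.
Proof.
move=> ->; apply/subsetP => b; rewrite inE => /asboolP[a [p1 [p2 [[c1 c2 ne dis] _]]]].
case/andP: c1 => hp1 /eqP hl1; case/andP: c2 => hp2 /eqP hl2.
case: b hl1 hl2 dis => [y|] hl1 hl2 _.
  case yC: (y \in C); first by apply/imsetP; exists y.
  move/negbT: yC => yC.
  case: (shape yC hp1 hl1) => [[e1 ea]|e1]; case: (shape yC hp2 hl2) => [[e2 _]|e2];
    subst; rewrite ?eqxx // in ne;
    move: hp1 hp2 hl1 hl2 => /= h1 h2 l1 l2; subst;
    first [by move: h1; rewrite /= Eirr | by move: h2; rewrite /= Eirr].
have f p : path X0 a p -> last a p = None -> p = [::].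
  move=> hp hl; apply/eqP; apply: contraTT (none_notin hp) => /(last_in a).
  by rewrite hl => ->.
by rewrite (f _ hp1 hl1) (f _ hp2 hl2) eqxx in ne.
Qed.

Lemma upper : xwidth X0 <= #|C|.+1.
Proof.
rewrite /xwidth ltnS; apply/bigmax_leqP => u _; apply/bigmax_leqP => v _.
have sub : bag_label X0 u v \subset Some @: C.
  by apply/bigcupsP => w _; exact: label_sub.
apply: leq_trans (subset_leq_card sub) _.
by rewrite card_imset //; exact: Some_inj.
Qed.

End S.

Theorem lemma38 (d : Order.disp_t) (V : finOrderType d) (E : rel V)
  (Esym : symmetric E) (Eirr : irreflexive E)
  (Econn : forall x y : V, connect E x y)
  (C : {set V}) (Ccov : vertex_cover E C)
  (Cmin : forall C' : {set V}, vertex_cover E C' -> #|C| <= #|C'|) :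
  (exists X : rel (option V),
      xorder (G_VC E) X None /\ xwidth X = #|C|.+1) /\
  (forall X : rel (option V),
      xorder (G_VC E) X None -> #|C|.+1 <= xwidth X).
Proof.
split; last by move=> X hX; exact: lower.
have hX := X0_xorder Esym Ccov.
exists (X0 E C); split=> //.
by apply/eqP; rewrite eqn_leq upper // (lower Esym Eirr Econn hX Cmin).
Qed.
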